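(* Let $M\ge2$, $1\le n\le M-1$, and let $k,k'\in\mathfrak{L}_M$ satisfy $k_{n-1}=k_n=k_{n+1}=1$ and $k'=k+e^n$, where $e^n$ is the $n$th standard basis vector of $\mathbb{Z}^{M+1}$. Then, as polynomials, $a(x,k')=-2x_{n-1}x_n\,a(x,k)$; in particular $a(x,k')/a(x,k)=-2x_{n-1}x_n$.
   Context: For $M\geq1$, $\mathfrak{L}_M\subset\mathbb{Z}^{M+1}_{\geq0}$ denotes the set of $k=(k_0,\ldots,k_M)$ with $k_0=1$ such that for all $1\leq n\leq M$, $k_n>0$ implies $k_{n-1}>0$. Vectors are indexed from $0$; $\mathbb{1}=(1,\ldots,1)$; inequalities and $\min$ between vectors are entrywise. Multi-index notation: $x^k=\prod_n x_n^{k_n}$, $\binom{k}{b}=\prod_n\binom{k_n}{b_n}$. For $k\in\mathfrak{L}_M$, $\tilde k=(k_1,\ldots,k_M,0)$, $u=\min\{\mathbb{1},\tilde k\}$, $V(k)=\{b\in\mathbb{Z}^{M+1}: u\le b\le \min\{k,\tilde k\}\}$, and $$a(x,k)=\sum_{b\in V(k)}\binom{k}{b}\binom{\tilde k-u}{b-u}(-x)^{\tilde k-b}x^{k-b}\prod_{n=0}^M(1-x_n^2)^{b_n}.$$ *)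

(* Defs.v *)
From HB Require Import structures.
From mathcomp Require Import all_boot all_order all_algebra.
Set Implicit Arguments. Unset Strict Implicit. Unset Printing Implicit Defensive.
Import Order.TTheory GRing.Theory Num.Theory.

Definition inL (M : nat) (k : 'I_M.+1 -> nat) : bool :=
  (k ord0 == 1) &&
  [forall i : 'I_M.+1, (0 < i) ==> (0 < k i) ==> (0 < k (inord i.-1))].

Definition ktil (M : nat) (k : 'I_M.+1 -> nat) (i : 'I_M.+1) : nat :=
  if i < M then k (inord i.+1) else 0.

Definition uvec (M : nat) (k : 'I_M.+1 -> nat) (i : 'I_M.+1) : nat :=
  minn 1 (ktil k i).

Definition addE (M : nat) (k : 'I_M.+1 -> nat) (n : 'I_M.+1) (i : 'I_M.+1) : nat :=
  k i + (i == n).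

(* bound on the entries of k; every b in V(k) has entries <= kmax k *)
Definition kmax (M : nat) (k : 'I_M.+1 -> nat) : nat := \max_(i < M.+1) k i.

Definition inV (M : nat) (k : 'I_M.+1 -> nat) (b : 'I_M.+1 -> nat) : bool :=
  [forall i : 'I_M.+1, (uvec k i <= b i) && (b i <= minn (k i) (ktil k i))].

Local Open Scope ring_scope.

Definition afun (R : comNzRingType) (M : nat) (x : 'I_M.+1 -> R)
  (k : 'I_M.+1 -> nat) : R :=
  \sum_(b : {ffun 'I_M.+1 -> 'I_(kmax k).+1} | inV k (fun i => nat_of_ord (b i)))
    \prod_(i < M.+1)
      (('C(k i, b i) * 'C(ktil k i - uvec k i, b i - uvec k i))%N%:R
       * (- x i) ^+ (ktil k i - b i)
       * x i ^+ (k i - b i)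
       * (1 - x i ^+ 2) ^+ b i).

(* Main.v *)
Require Import Defs.
From HB Require Import structures.
From mathcomp Require Import all_boot all_order all_algebra.
From mathcomp Require Import zify ring.
Import Order.TTheory GRing.Theory Num.Theory.
Set Implicit Arguments. Unset Strict Implicit.
Local Open Scope ring_scope.

Definition cnd M (k : 'I_M.+1 -> nat) i (j:nat) := (uvec k i <= j)%N && (j <= minn (k i) (ktil k i))%N.
Definition trm (R : comNzRingType) M (x : 'I_M.+1 -> R) k i (j:nat) : R :=
      (('C(k i, j) * 'C(ktil k i - uvec k i, j - uvec k i))%N%:R
       * (- x i) ^+ (ktil k i - j)
       * x i ^+ (k i - j)
       * (1 - x i ^+ 2) ^+ j).

Lemma afun_prod R M x k : @afun R M x k =
  \prod_i \sum_(j < (kmax k).+1 | cnd k i j) trm x k i j.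
Proof.
rewrite bigA_distr_big_dep /afun.
apply: eq_bigl => b; apply/forallP/familyP => H i; by have := H i.
Qed.

Lemma sum_single (R : comNzRingType) N (P : pred nat) (F : nat -> R) :
  (forall j, P j = (j == 1%N)) -> (0 < N)%N ->
  \sum_(j < N.+1 | P j) F j = F 1%N.
Proof.
move=> HP HN; rewrite (big_pred1 (inord 1)) => [|j]; first by rewrite inordK.
by rewrite /= HP -val_eqE /= inordK.
Qed.

Lemma sum_widen (R : comNzRingType) N1 N2 (P : pred nat) (F : nat -> R) :
  (N1 <= N2)%N -> (forall j, P j -> j <= N1)%N ->
  \sum_(j < N1.+1 | P j) F j = \sum_(j < N2.+1 | P j) F j.
Proof.
move=> H12 HP; rewrite (big_ord_widen_cond N2.+1) //.
by apply: eq_bigl => j; case Pj: (P j) => //=; rewrite ltnS HP.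
Qed.

Lemma kmax_ge M (k : 'I_M.+1 -> nat) i : (k i <= kmax k)%N.
Proof. rewrite /kmax; exact: leq_bigmax. Qed.

Unset Implicit Arguments.
Theorem proposition2p4 (M : nat) (hM : (2 <= M)%N) (n : 'I_M.+1)
  (hn1 : (1 <= n)%N) (hn2 : (n <= M - 1)%N) (k : 'I_M.+1 -> nat)
  (hk : inL k) (hk' : inL (addE k n))
  (hkm : k (inord n.-1) = 1%N) (hkn : k n = 1%N) (hkp : k (inord n.+1) = 1%N) :
  forall (R : comNzRingType) (x : 'I_M.+1 -> R),
    afun x (addE k n) = - 2%:R * x (inord n.-1) * x n * afun x k.
Proof.
move=> R x; set k2 := addE k n; set m : 'I_M.+1 := inord n.-1.
have hnM := ltn_ord n.
have vm : nat_of_ord m = n.-1 by rewrite /m inordK //; lia.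
have mn : m != n by apply/eqP => /(congr1 val) /=; rewrite vm; lia.
have Hk2 i : k2 i = (k i + (i == n))%N by [].
have kmax_le : (kmax k <= kmax k2)%N.
  by apply/bigmax_leqP => i _; apply: leq_trans (kmax_ge k2 i); rewrite Hk2 leq_addr.
have ktm : ktil k m = 1%N.
  rewrite /ktil vm ifT; last by lia.
  suff -> : inord n.-1.+1 = n by [].
  by apply: val_inj; rewrite /= prednK // inordK.
have kt2m : ktil k2 m = 2%N.
  rewrite /ktil vm ifT; last by lia.
  suff -> : inord n.-1.+1 = n by rewrite Hk2 hkn eqxx.
  by apply: val_inj; rewrite /= prednK // inordK.
have ktn : ktil k n = 1%N by rewrite /ktil ifT //; lia.
have kt2n : ktil k2 n = 1%N.
  rewrite /ktil ifT; last by lia.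
  rewrite Hk2 hkp; suff : (inord n.+1 != n) by move/negPf->.
  by rewrite -val_eqE /= inordK ?neq_ltn ?ltnSn //; lia.
have k2m : k2 m = 1%N by rewrite Hk2 (negPf mn) addn0.
have k2n : k2 n = 2%N by rewrite Hk2 hkn eqxx.
have kpos : (0 < kmax k)%N by apply: leq_trans (kmax_ge k n); rewrite hkn.
pose c i : R := if i == m then - x m else if i == n then 2%:R * x n else 1.
have Hc : forall i, \sum_(j < (kmax k2).+1 | cnd k2 i j) trm x k2 i j
    = c i * \sum_(j < (kmax k).+1 | cnd k i j) trm x k i j.
  move=> i; rewrite /c; case: eqP => [->|im].
    rewrite !sum_single //; last by apply: leq_trans kmax_le.
    - rewrite /trm k2m kt2m hkm ktm /uvec /=. rewrite kt2m ktm /= !expr1 !expr0; ring.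
    - by move=> j; rewrite /cnd /uvec hkm ktm /=; lia.
    - by move=> j; rewrite /cnd /uvec k2m kt2m /=; lia.
  case: eqP => [->|ino].
    rewrite !sum_single //; last by apply: leq_trans kmax_le.
    - rewrite /trm k2n kt2n hkn ktn /uvec /=. rewrite kt2n ktn /= !expr1 !expr0 (_ : (binomial 2 1 * _)%N = 2%N) // (_ : (binomial 1 1 * _)%N = 1%N) //; ring.
    - by move=> j; rewrite /cnd /uvec hkn ktn /=; lia.
    - by move=> j; rewrite /cnd /uvec k2n kt2n /=; lia.
  have e1 : k2 i = k i by rewrite Hk2; move/eqP/negPf: ino => ->; rewrite addn0.
  have e2 : ktil k2 i = ktil k i.
    rewrite /ktil; case: ifP => // iM; rewrite Hk2.
    suff : (inord i.+1 != n) by move/negPf->; rewrite addn0.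
    apply/eqP => /(congr1 val) /=; rewrite inordK; last by lia.
    move=> ein; apply: im; apply: val_inj => /=; rewrite vm -ein; lia.
  rewrite mul1r (@sum_widen R (kmax k) (kmax k2) (cnd k i) (trm x k i) kmax_le).
    by apply: eq_big => j; rewrite /cnd /trm /uvec e1 e2.
  move=> j /andP [_ hj]; apply: leq_trans (kmax_ge k i); apply: leq_trans hj (geq_minl _ _).
rewrite !afun_prod (eq_bigr _ (fun i _ => Hc i)) big_split /=.
congr (_ * _).
rewrite (bigD1 m) //= (bigD1 n) /=; last by rewrite eq_sym.
rewrite big1 => [|i /andP [him hin]]; last by rewrite /c (negPf hin) (negPf him).
by rewrite /c eqxx eq_sym (negPf mn) eqxx; ring.
Qed.
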